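(* Assume (A1)–(A3) and $m_1<0$. Then for every $k\in\mathbb N$, the random variable $\sup_{0\le s\le T_1(k)}|Y_1(s)|$ is $\mathbb P_{(k,0)}$-integrable, where $T_1(k)=\inf\{n>0: X_1(n)=k\}$.
   Context: Let $\mathbb N=\{0,1,2,\dots\}$ and fix an integer $k_0\ge1$. Let $\mu$, $\mu'_j$ ($0\le j<k_0$), $\mu''_i$ ($0\le i<k_0$), $\mu_{ij}$ ($0\le i,j<k_0$) be probability measures on $\mathbb Z^2$. The random walk $Z=(X(n),Y(n))$ on $\mathbb N^2$ has transition probabilities $p((i,j)\to(i',j'))$ equal to $\mu(i'-i,j'-j)$ if $i,j\ge k_0$; $\mu'_j(i'-i,j'-j)$ if $i\ge k_0$, $0\le j<k_0$; $\mu''_i(i'-i,j'-j)$ if $0\le i<k_0$, $j\ge k_0$; $\mu_{ij}(i'-i,j'-j)$ if $0\le i,j<k_0$. Assumptions: (A1) $\mu(a,b)=0$ if $a<-k_0$ or $b<-k_0$; $\mu'_j(a,b)=0$ if $a<-k_0$ or $b<-j$; $\mu''_i(a,b)=0$ if $b<-k_0$ or $a<-i$; $\mu_{ij}(a,b)=0$ if $a<-i$ or $b<-j$. (A2) There are $\delta,\gamma,C>0$ with $\sup_{(i,j)\in\mathbb N^2}\mathbb E_{(i,j)}[\exp(\delta(X(1)-i)+\gamma(Y(1)-j))]\le C$. (A3) $Z_0,Z_1,Z_2,Z$ are irreducible on their state spaces. $Z_0$: random walk on $\mathbb Z^2$ with increment law $\mu$; $m_1=\sum a\mu(a,b)$.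 $Z_1=(X_1,Y_1)$: Markov chain on $\mathbb N\times\mathbb Z$ with transitions $\mu(i'-i,j'-j)$ from $(i,j)$ if $i\ge k_0$ and $\mu''_i(i'-i,j'-j)$ if $0\le i<k_0$; $\mathbb P_{(k,0)}$ is its law from $(k,0)$. $Z_2$: Markov chain on $\mathbb Z\times\mathbb N$ with transitions $\mu$ if $j\ge k_0$ and $\mu'_j$ if $0\le j<k_0$. *)

(* Defs.v *)
From HB Require Import structures.
From mathcomp Require Import all_boot all_order all_algebra.
From mathcomp Require Import all_classical all_reals all_analysis.
Set Implicit Arguments. Unset Strict Implicit. Unset Printing Implicit Defensive.
Import Order.TTheory GRing.Theory Num.Theory.
Local Open Scope classical_set_scope.
Local Open Scope ring_scope.

Section Defs.
Variable R : realType.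

Definition probZ2 (mu : int * int -> R) : Prop :=
  (forall d, 0 <= mu d) /\ \esum_(d in [set: int * int]) (mu d)%:E = 1%E.

Fixpoint pathprob (T : Type) (p : T -> T -> R) (x : T) (s : seq T) : R :=
  match s with
  | [::] => 1
  | y :: s' => p x y * pathprob p y s'
  end.

Definition irreducible (T : Type) (p : T -> T -> R) : Prop :=
  forall x y : T, exists s : seq T, last x s = y /\ 0 < pathprob p x s.

Definition diff (a a' b b' : int) : int * int := (a' - a, b' - b).

Definition pZ (k0 : nat) (mu : int * int -> R) (mu1 mu2 : nat -> int * int -> R)
  (mu12 : nat -> nat -> int * int -> R) (z z' : nat * nat) : R :=
  let d := diff z.1%:Z z'.1%:Z z.2%:Z z'.2%:Z in
  if (k0 <= z.1)%N && (k0 <= z.2)%N then mu d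
  else if (k0 <= z.1)%N then mu1 z.2 d
  else if (k0 <= z.2)%N then mu2 z.1 d
  else mu12 z.1 z.2 d.

Definition pZ0 (mu : int * int -> R) (z z' : int * int) : R :=
  mu (diff z.1 z'.1 z.2 z'.2).

Definition pZ1 (k0 : nat) (mu : int * int -> R) (mu2 : nat -> int * int -> R)
  (z z' : nat * int) : R :=
  let d := diff z.1%:Z z'.1%:Z z.2 z'.2 in
  if (k0 <= z.1)%N then mu d else mu2 z.1 d.

Definition pZ2 (k0 : nat) (mu : int * int -> R) (mu1 : nat -> int * int -> R)
  (z z' : int * nat) : R :=
  let d := diff z.1 z'.1 z.2%:Z z'.2%:Z in
  if (k0 <= z.2)%N then mu d else mu1 z.2 d.

(* m_1 = sum_{(a,b)} a mu(a,b), as an extended real (positive part minus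
   negative part). *)
Definition m1 (mu : int * int -> R) : \bar R :=
  (\esum_(d in [set: int * int]) (Num.max (d.1%:~R : R) 0 * mu d)%:E -
   \esum_(d in [set: int * int]) (Num.max (- (d.1%:~R : R)) 0 * mu d)%:E)%E.

(* Given the states s = [:: z1; ...; zn] following z0 (with |Y(0)| = acc),
   returns max_{0 <= t <= min(T, n)} |Y(t)| where T = inf{t > 0 : X(t) = k}. *)
Fixpoint stopmax (k : nat) (acc : nat) (s : seq (nat * int)) : nat :=
  match s with
  | [::] => acc
  | z :: s' =>
      let acc' := maxn acc `|z.2|%N in
      if z.1 == k then acc' else stopmax k acc' s'
  end.

(* E_{(k,0)}[ max_{0 <= s <= min(T_1(k), n)} |Y_1(s)| ] for the chain Z_1
   with transition probabilities p. *)
Definition Etrunc (p : nat * int -> nat * int -> R) (k n : nat) : \bar R :=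
  \esum_(s in [set s : seq (nat * int) | size s = n])
     (pathprob p (k, 0%:Z) s * ((stopmax k 0 s)%:R : R))%:E.

End Defs.

(* Main.v *)
Require Import Defs.
From HB Require Import structures.
From mathcomp Require Import all_boot all_order all_algebra.
From mathcomp Require Import all_classical all_reals all_analysis.
From mathcomp Require Import zify ring lra.
Set Implicit Arguments. Unset Strict Implicit. Unset Printing Implicit Defensive.
Import Order.TTheory GRing.Theory Num.Theory.
Local Open Scope classical_set_scope.
Local Open Scope ring_scope.

Section Gen.
Variable R : realType.
Local Open Scope ereal_scope.

Lemma esum_scale_le (T : choiceType) (I : set T) (r : R) (a : T -> \bar R) :
  (0 <= r)%R -> (forall i, I i -> 0 <= a i) ->
  \esum_(i in I) (r%:E * a i) <= r%:E * \esum_(i in I) a i.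
Proof.
move=> r0 a0; apply: ge_ereal_sup => _ [X [finX XI]] <- /=.
rewrite fsbig_finite //= big_seq_cond -ge0_sume_distrr; last first.
  by move=> i /andP[+ _]; rewrite in_fset_set // inE => /XI /a0.
rewrite -big_seq_cond -fsbig_finite //; apply: lee_wpmul2l; first by rewrite lee_fin.
by apply: ereal_sup_ubound; exists X.
Qed.

Lemma esum_split1 (T : choiceType) (F : T -> \bar R) (y : T) :
  (forall i, 0 <= F i) ->
  \esum_(i in [set: T]) F i = F y + \esum_(i in ~` [set y]) F i.
Proof.
move=> F0; rewrite (esumID [set y]); last by move=> i _; apply: F0.
by rewrite setTI esum_set1 // setTI.
Qed.

Lemma esum_single (T : choiceType) (F : T -> \bar R) (y : T) :
  (forall i, 0 <= F i) -> F y <= \esum_(i in [set: T]) F i.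
Proof.
move=> F0; rewrite (esum_split1 y) //; rewrite leeDl //.
by apply: esum_ge0 => i _; apply: F0.
Qed.

Lemma pathprob_cat (T : Type) (p : T -> T -> R) x s1 s2 :
  pathprob p x (s1 ++ s2) = (pathprob p x s1 * pathprob p (last x s1) s2)%R.
Proof. by elim: s1 x => [|y s IH] x /=; rewrite ?mul1r // IH mulrA. Qed.

End Gen.


Section Part1.
Variable R : realType.
Variables (p : nat * int -> nat * int -> R) (k k0 : nat) (c B eps : R).
Hypothesis Hp0 : forall z z', (0 <= p z z')%R.
Hypothesis Hmass : forall z, (\esum_(z' in [set: nat * int]) (p z z')%:E <= 1)%E.
Hypothesis Hc : (0 < c)%R.
Hypothesis HB : (0 <= B)%R.
Hypothesis Heps : (0 < eps)%R.
Hypothesis Hdy : forall z,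
  (\esum_(z' in [set: nat * int]) (p z z' * (`|z'.2 - z.2|%N)%:R)%:E <= c%:E)%E.
Hypothesis Hdx1 : forall z,
  (\esum_(z' in [set: nat * int]) (p z z' * (z'.1)%:R)%:E <= (z.1%:R + B)%:E)%E.
Hypothesis Hdx2 : forall z, (k0 <= z.1)%N ->
  (\esum_(z' in [set: nat * int]) (p z z' * (z'.1)%:R)%:E <= (z.1%:R - eps)%:E)%E.

Hypothesis Hpath : forall x, (x < k0)%N -> exists (m : nat) (q : R), (0 < q)%R /\
  forall y : int, exists s, size s = m /\ s != [::] /\ (last (x, y) s).1 = k /\
     (q <= pathprob p (x, y) s)%R.

Lemma fin_choice (P : nat -> R -> Prop) N :
  (forall x K K', (K <= K')%R -> P x K -> P x K') ->
  (forall x, (x < N)%N -> exists K, P x K) ->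
  exists K, (0 <= K)%R /\ forall x, (x < N)%N -> P x K.
Proof.
move=> mono; elim: N => [|N IH] ex; first by exists 0%R.
have [K1 [K10 HK1]] : exists K, (0 <= K)%R /\ forall x, (x < N)%N -> P x K.
  by apply: IH => x hx; apply: ex; apply: ltnW.
have [K2 HK2] := ex N (ltnSn N).
exists (Num.max K1 K2); split; first by rewrite le_max K10.
move=> x; rewrite ltnS leq_eqVlt => /orP[/eqP ->|hx].
  by apply: mono HK2; rewrite le_max lexx orbT.
by apply: mono (HK1 x hx); rewrite le_max lexx.
Qed.

Local Open Scope ereal_scope.

Definition Qop (f : nat * int -> \bar R) z :=
  \esum_(z' in [set: nat * int]) ((p z z')%:E * (if z'.1 == k then 0 else f z')).

Lemma Q_ge0 f : (forall z, 0 <= f z) -> forall z, 0 <= Qop f z.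
Proof.
move=> f0 z; apply: esum_ge0 => z' _; apply: mule_ge0; first by rewrite lee_fin.
by case: ifP.
Qed.

Lemma Q_le f g : (forall z, f z <= g z) -> forall z, Qop f z <= Qop g z.
Proof.
move=> fg z; apply: le_esum => z' _; apply: lee_wpmul2l; first by rewrite lee_fin.
by case: ifP.
Qed.

Lemma Q_add f g : (forall z, 0 <= f z) -> (forall z, 0 <= g z) ->
  forall z, Qop (fun z => f z + g z) z = Qop f z + Qop g z.
Proof.
move=> f0 g0 z; rewrite /Qop -esumD; last 2 first.
- by move=> z' _; apply: mule_ge0; [rewrite lee_fin|case: ifP].
- by move=> z' _; apply: mule_ge0; [rewrite lee_fin|case: ifP].
apply: eq_esum => z' _; case: ifP => _; first by rewrite !mule0 adde0.
by rewrite ge0_muleDr.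
Qed.

Lemma Q_scale f r : (0 <= r)%R -> (forall z, 0 <= f z) ->
  forall z, Qop (fun z => r%:E * f z) z <= r%:E * Qop f z.
Proof.
move=> r0 f0 z; apply: le_trans (esum_scale_le r0 _); last first.
  by move=> z' _; apply: mule_ge0; [rewrite lee_fin|case: ifP].
apply: le_esum => z' _; case: ifP => _; first by rewrite !mule0.
by rewrite muleCA.
Qed.

Lemma p_le1 z z' : (p z z' <= 1)%R.
Proof.
rewrite -lee_fin; apply: le_trans (Hmass z).
by apply: (@esum_single _ _ (fun z' => (p z z')%:E)) => i; rewrite lee_fin.
Qed.

Lemma Q_const a : (0 <= a)%R -> forall z, Qop (fun _ => a%:E) z <= a%:E.
Proof.
move=> a0 z; apply: (@le_trans _ _ (\esum_(z' in [set: nat * int]) (a%:E * (p z z')%:E))).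
  apply: le_esum => z' _; case: ifP => _; first by rewrite mule0 mule_ge0 // lee_fin.
  by rewrite muleC.
apply: (le_trans (@esum_scale_le _ _ _ a (fun z' => (p z z')%:E) a0 (fun i _ => ltac:(by rewrite lee_fin)))).
by rewrite -[leRHS]mule1; apply: lee_wpmul2l; rewrite ?lee_fin.
Qed.

Lemma Q_lin_gen (al be : R) : (0 <= al)%R -> (0 <= be)%R -> forall z,
  Qop (fun z => (al * z.1%:R + be)%:E) z <=
  al%:E * (\esum_(z' in [set: nat * int]) (p z z' * (z'.1)%:R)%:E) + be%:E.
Proof.
move=> al0 be0 z.
apply: (@le_trans _ _ (\esum_(z' in [set: nat * int])
   (al%:E * (p z z' * (z'.1)%:R)%:E + be%:E * (p z z')%:E))).
  apply: le_esum => z' _; case: ifP => _.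
    by rewrite mule0 adde_ge0 // mule_ge0 // lee_fin ?mulr_ge0.
  by rewrite -!EFinM -EFinD lee_fin le_eqVlt; apply/orP; left; apply/eqP; ring.
rewrite esumD; last 2 first.
- by move=> z' _; rewrite mule_ge0 // lee_fin ?mulr_ge0.
- by move=> z' _; rewrite mule_ge0 // lee_fin.
apply: leeD; first by apply: esum_scale_le => // z' _; rewrite lee_fin mulr_ge0.
apply: (le_trans (@esum_scale_le _ _ _ be (fun z' => (p z z')%:E) be0 (fun i _ => ltac:(by rewrite lee_fin)))).
by rewrite -[leRHS]mule1; apply: lee_wpmul2l; rewrite ?lee_fin.
Qed.


Fixpoint Qn (m : nat) (f : nat * int -> \bar R) : nat * int -> \bar R :=
  if m is m'.+1 then Qop (Qn m' f) else f.

Lemma Qn_ge0 m f : (forall z, 0 <= f z) -> forall z, 0 <= Qn m f z.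
Proof. by move=> f0; elim: m => [|m IH] //= z; apply: Q_ge0. Qed.

Lemma Qn_le m f g : (forall z, f z <= g z) -> forall z, Qn m f z <= Qn m g z.
Proof. by move=> fg; elim: m => [|m IH] //= z; apply: Q_le. Qed.

Definition one : nat * int -> \bar R := fun _ => 1.

Lemma Qn_one_le1 m z : Qn m one z <= 1.
Proof.
elim: m z => [|m IH] z /=; first by [].
have := Q_const (@ler01 R) z; apply: le_trans; exact: Q_le.
Qed.

Fixpoint u (n : nat) : nat * int -> \bar R :=
  if n is n'.+1 then fun z => c%:E + Qop (u n') z else fun _ => 0.

Lemma u_ge0 n z : 0 <= u n z.
Proof.
elim: n z => [|n IH] z //=; apply: adde_ge0; first by rewrite lee_fin ltW.
exact: Q_ge0.
Qed.

Lemma u_lecn n z : u n z <= (c * n%:R)%:E.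
Proof.
elim: n z => [|n IH] z /=; first by rewrite mulr0.
have h0 : (0 <= c * n%:R)%R by rewrite mulr_ge0 // ltW.
apply: le_trans (leeD (lexx c%:E) (le_trans (Q_le IH z) (Q_const h0 z))) _.
by rewrite -EFinD lee_fin mulrS; lra.
Qed.


Lemma u_shift n m z : u (n + m) z <= (c * m%:R)%:E + Qn m (u n) z.
Proof.
elim: m z => [|m IH] z; first by rewrite addn0 mulr0 add0e.
rewrite addnS /=.
have h0 : (0 <= c * m%:R)%R by rewrite mulr_ge0 // ltW.
have := Q_le IH z; rewrite Q_add; last 2 first.
- by move=> ?; rewrite lee_fin.
- by move=> ?; apply: Qn_ge0 => ?; apply: u_ge0.
move=> h1; have h2 := Q_const h0 z.
apply: le_trans (leeD (lexx c%:E) h1) _.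
rewrite addeA -[X in _ <= X]/(_ + _)%E; apply: leeD => //.
apply: le_trans (leeD (lexx c%:E) h2) _; rewrite -EFinD lee_fin mulrS; lra.
Qed.

Lemma Qn_V m (al K : R) : (0 <= al)%R -> (0 <= K)%R -> forall z,
  Qn m (fun z => (al * z.1%:R + K)%:E) z <=
  (al * (z.1%:R + m%:R * B))%:E + K%:E * Qn m one z.
Proof.
move=> al0 K0; elim: m => [|m IH] z /=.
  by rewrite /one mule1 mul0r addr0 EFinD.
have hb : (0 <= al * (m%:R * B))%R by rewrite !mulr_ge0.
apply: (@le_trans _ _ (Qop (fun z => (al * z.1%:R + al * (m%:R * B))%:E + K%:E * Qn m one z) z)).
  apply: Q_le => z'; apply: le_trans (IH z') _.
  by rewrite mulrDr.
rewrite Q_add; last 2 first.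
- by move=> z'; rewrite lee_fin addr_ge0 // mulr_ge0.
- by move=> z'; rewrite mule_ge0 ?lee_fin //; apply: Qn_ge0.
apply: leeD; last by apply: Q_scale => // z'; apply: Qn_ge0.
apply: le_trans (Q_lin_gen al0 hb z) _.
rewrite (_ : (al * (z.1%:R + m.+1%:R * B))%:E = al%:E * (z.1%:R + B)%:E + (al * (m%:R * B))%:E); last first.
  by rewrite -EFinM -EFinD; congr (_%:E); rewrite mulrSr; ring.
apply: leeD => //; apply: lee_wpmul2l; rewrite ?lee_fin //.
Qed.

Lemma Q_drift (al K : R) : (0 <= al)%R -> (0 <= K)%R -> forall z, (k0 <= z.1)%N ->
  Qop (fun z => (al * z.1%:R + K)%:E) z <= (al * (z.1%:R - eps) + K)%:E.
Proof.
move=> al0 K0 z hz; apply: le_trans (Q_lin_gen al0 K0 z) _.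
rewrite EFinD EFinM; apply: leeD => //; apply: lee_wpmul2l; rewrite ?lee_fin //.
exact: Hdx2.
Qed.


Lemma pathprob_ge0 z s : (0 <= pathprob p z s)%R.
Proof. by elim: s z => [|y s IH] z //=; rewrite mulr_ge0. Qed.

Lemma pathprob_le1 z s : (pathprob p z s <= 1)%R.
Proof.
elim: s z => [|y s IH] z //=; apply: mulr_ile1 => //; [exact: pathprob_ge0|exact: p_le1].
Qed.

Lemma fin01 (x : \bar R) : 0 <= x -> x <= 1 -> x = (fine x)%:E /\ (0 <= fine x <= 1)%R.
Proof.
move=> h0 h1; have xf : x \is a fin_num by rewrite ge0_fin_numE // (le_lt_trans h1) // ltry.
split; first by rewrite fineK.
by rewrite -!lee_fin fineK // h0 h1.
Qed.

Lemma path_bound s z : s != [::] -> (last z s).1 = k ->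
  Qn (size s) one z + (pathprob p z s)%:E <= 1.
Proof.
elim: s z => [//|y s IH] z _ hl /=.
set F := fun z' => (p z z')%:E * (if z'.1 == k then 0 else Qn (size s) one z').
have F0 : forall i, 0 <= F i.
  move=> i; apply: mule_ge0; first by rewrite lee_fin.
  by case: ifP => // _; apply: Qn_ge0.
have -> : Qop (Qn (size s) one) z = F y + \esum_(i in ~` [set y]) F i.
  exact: esum_split1.
have pf0 : forall i, 0 <= (p z i)%:E by move=> i; rewrite lee_fin.
have hmass : (p z y)%:E + \esum_(i in ~` [set y]) (p z i)%:E <= 1.
  by rewrite -(@esum_split1 _ _ (fun i => (p z i)%:E) y pf0).
have hS : \esum_(i in ~` [set y]) F i <= \esum_(i in ~` [set y]) (p z i)%:E.
  apply: le_esum => i _; rewrite /F -[leRHS]mule1; apply: lee_wpmul2l; first by [].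
  by case: ifP => // _; apply: Qn_one_le1.
have S0 : 0 <= \esum_(i in ~` [set y]) (p z i)%:E by apply: esum_ge0.
have SF0 : 0 <= \esum_(i in ~` [set y]) F i by apply: esum_ge0.
have S1 : \esum_(i in ~` [set y]) (p z i)%:E <= 1.
  by apply: le_trans hmass; rewrite leeDr // lee_fin.
have := fin01 S0 S1; case=> eS /andP[S0' S1'].
have := fin01 SF0 (le_trans hS S1); case=> eSF /andP[SF0' SF1'].
move: hmass hS; rewrite eS eSF -EFinD !lee_fin => hmass hS.
set fS := fine _ in eS S0' S1' hmass hS; set fSF := fine _ in eSF SF0' SF1' hS.
have py0 := Hp0 z y; have pp0 := pathprob_ge0 y s; have pp1 := pathprob_le1 y s.
rewrite eSF /= /F; case: (eqVneq y.1 k) => hy.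
  rewrite mule0 add0e -EFinD lee_fin; nra.
have sn : s != [::] by move: hl; case: (s) => //= hl; rewrite hl eqxx in hy.
have := IH y sn hl; have q0 := Qn_ge0 (size s) (f:=one) (fun _ => ltac:(by rewrite /one lee_fin)) y.
have := fin01 q0 (Qn_one_le1 (size s) y); case=> eq /andP[q0' q1'].
rewrite eq -EFinD lee_fin => hq; rewrite -EFinM -!EFinD lee_fin; nra.
Qed.


Lemma u_bound : exists al K : R, (0 <= al)%R /\ (0 <= K)%R /\
  forall n z, u n z <= (al * z.1%:R + K)%:E.
Proof.
pose al := (c / eps)%R.
have al0 : (0 <= al)%R by rewrite /al divr_ge0 // ltW.
have hal : (al * eps = c)%R by rewrite /al divfK // gt_eqF.
pose P x K := exists (m : nat) (q : R), (0 < q)%R /\ (c * m%:R <= K)%R /\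
  (m%:R * (c + al * B) <= K * q)%R /\
  forall y : int, exists s, size s = m /\ s != [::] /\ (last (x, y) s).1 = k /\
     (q <= pathprob p (x, y) s)%R.
have [K [K0 HK]] : exists K, (0 <= K)%R /\ forall x, (x < k0)%N -> P x K.
  apply: fin_choice.
    move=> x K K' hKK' [m [q [q0 [h1 [h2 h3]]]]]; exists m, q; split => //.
    split; first exact: le_trans hKK'.
    split => //; apply: le_trans h2 _; apply: ler_wpM2r => //; exact: ltW.
  move=> x hx; have [m [q [q0 hs]]] := Hpath hx.
  have hm0 : (0 <= m%:R * (c + al * B))%R by apply: mulr_ge0 => //; apply: addr_ge0; [exact: ltW | exact: mulr_ge0].
  exists (c * m%:R + m%:R * (c + al * B) / q)%R, m, q; split => //; split.
    by rewrite lerDl divr_ge0 // ltW.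
  split => //; rewrite mulrDl divfK; last by rewrite gt_eqF.
  have : (0 <= c * m%:R * q)%R by rewrite !mulr_ge0 // ltW.
  lra.
exists al, K; split => //; split => //.
elim/ltn_ind => n IHn [x y] /=.
case: (leqP k0 x) => hz.
  case: n IHn => [|n] IHn /=; first by rewrite lee_fin addr_ge0 // mulr_ge0.
  have h1 : Qop (u n) (x, y) <= Qop (fun z => (al * z.1%:R + K)%:E) (x, y).
    by apply: Q_le => z'; apply: IHn.
  have h2 := @Q_drift al K al0 K0 (x, y) hz.
  apply: le_trans (leeD (lexx c%:E) (le_trans h1 h2)) _.
  by rewrite -EFinD lee_fin /= mulrBr hal; lra.
have [m [q [q0 [h1 [h2 hs]]]]] := HK _ hz.
have [s [hsz [sn [hl hq]]]] := hs y.
have xK : (K <= al * x%:R + K)%R by rewrite lerDr mulr_ge0.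
case: (ltnP n m) => hnm.
  apply: le_trans (u_lecn n (x, y)) _; rewrite lee_fin.
  apply: le_trans xK; apply: le_trans h1; apply: ler_wpM2l; first exact: ltW.
  by rewrite ler_nat ltnW.
have m0 : (0 < m)%N by rewrite -hsz; case: (s) sn.
have hlt : (n - m < n)%N by lia.
rewrite -(subnK hnm); apply: le_trans (u_shift _ _ _) _.
have h3 : Qn m (u (n - m)) (x, y) <= Qn m (fun z => (al * z.1%:R + K)%:E) (x, y).
  by apply: Qn_le => z'; apply: IHn.
have h4 := Qn_V m al0 K0 (x, y).
have hpb := path_bound sn hl; rewrite hsz in hpb.
have q0' := Qn_ge0 m (f:=one) (fun _ => ltac:(by rewrite /one lee_fin)) (x, y).
have := fin01 q0' (Qn_one_le1 m (x, y)); case=> er /andP[r0 r1].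
apply: le_trans (leeD (lexx _) (le_trans h3 h4)) _.
move: hpb; rewrite er -EFinM -!EFinD !lee_fin /= => hpb.
set r := fine _ in er r0 r1 hpb *.
have hKr : (K * r <= K * (1 - q))%R by apply: ler_wpM2l => //; lra.
have e1 : (al * (x%:R + m%:R * B) = al * x%:R + m%:R * (al * B))%R by ring.
rewrite e1; move: h2; rewrite mulrDr => h2; lra.
Qed.


Lemma esum_cons (f : seq (nat * int) -> \bar R) n : (forall s, 0 <= f s) ->
  \esum_(s in [set s : seq (nat * int) | size s = n.+1]) f s =
  \esum_(z' in [set: nat * int])
     (\esum_(s in [set s : seq (nat * int) | size s = n]) f (z' :: s)).
Proof.
move=> f0; rewrite esum_esum; last by move=> *; apply: f0.
apply: reindex_esum; split.
- by move=> [z' s] [_ /= hs]; rewrite /= hs.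
- by move=> [a s] [b t] _ _ /= [-> ->].
- move=> [|a s] //= hs; exists (a, s) => //; split => //=.
  by case: hs.
Qed.

Lemma mass_paths n z :
  \esum_(s in [set s : seq (nat * int) | size s = n]) (pathprob p z s)%:E <= 1.
Proof.
elim: n z => [|n IH] z.
  rewrite (_ : [set s : seq (nat * int) | size s = 0%N] = [set [::]]).
    by rewrite esum_set1 // lee_fin.
  by apply/seteqP; split => s; case: s.
rewrite esum_cons; last by move=> s; rewrite lee_fin pathprob_ge0.
apply: le_trans (Hmass z); apply: le_esum => z' _ /=.
under eq_esum do rewrite EFinM.
apply: le_trans (esum_scale_le (Hp0 z z') _) _.
  by move=> s _; rewrite lee_fin pathprob_ge0.
by rewrite -[leRHS]mule1; apply: lee_wpmul2l; rewrite ?lee_fin.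
Qed.

Definition Eg z acc n := \esum_(s in [set s : seq (nat * int) | size s = n])
  (pathprob p z s * (stopmax k acc s)%:R)%:E.

Lemma claimA n : forall z acc, (`|z.2| <= acc)%N -> Eg z acc n <= (acc%:R)%:E + u n z.
Proof.
elim: n => [|n IH] z acc hz.
  rewrite /Eg (_ : [set s : seq (nat * int) | size s = 0%N] = [set [::]]).
    by rewrite esum_set1 /= ?mul1r ?adde0 // lee_fin.
  by apply/seteqP; split => s; case: s.
rewrite /Eg esum_cons; last by move=> s; rewrite lee_fin mulr_ge0 ?pathprob_ge0.
apply: (@le_trans _ _ (\esum_(z' in [set: nat * int])
   ((p z z')%:E * (((maxn acc `|z'.2|)%:R)%:E + (if z'.1 == k then 0 else u n z'))))).
  apply: le_esum => z' _ /=.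
  set acc' := maxn acc `|z'.2|.
  case: ifP => hk.
    rewrite adde0.
    under eq_esum do rewrite mulrAC EFinM.
    apply: le_trans (esum_scale_le _ _) _.
    - by rewrite mulr_ge0.
    - by move=> s _; rewrite lee_fin pathprob_ge0.
    by rewrite -EFinM -[leRHS]mule1; apply: lee_wpmul2l; rewrite ?lee_fin ?mulr_ge0 ?mass_paths.
  under eq_esum do rewrite -mulrA EFinM.
  apply: le_trans (esum_scale_le (Hp0 z z') _) _.
    by move=> s _; rewrite lee_fin mulr_ge0 ?pathprob_ge0.
  apply: lee_wpmul2l; first by rewrite lee_fin.
  by apply: IH; rewrite leq_maxr.
have hu : forall z', 0 <= (if z'.1 == k then 0 else u n z').
  by move=> z'; case: ifP => // _; apply: u_ge0.
apply: (@le_trans _ _ (\esum_(z' in [set: nat * int]) ((acc%:R)%:E * (p z z')%:E +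
   ((p z z' * (`|z'.2 - z.2|%N)%:R)%:E +
    (p z z')%:E * (if z'.1 == k then 0 else u n z'))))).
  apply: le_esum => z' _; rewrite ge0_muleDr ?lee_fin //.
  rewrite addeA; apply: leeD => //; rewrite -!EFinM -EFinD lee_fin.
  have hn : (maxn acc `|z'.2| <= acc + `|z'.2 - z.2|)%N.
    rewrite geq_max leq_addr /=.
    have := leqD_dist z'.2 z.2 0; rewrite !subr0 => h.
    by apply: leq_trans h _; rewrite addnC leq_add2r.
  have hr : ((maxn acc `|z'.2|)%:R <= acc%:R + (`|z'.2 - z.2|%N)%:R :> R)%R.
    by rewrite -natrD ler_nat.
  have := Hp0 z z'; nra.
rewrite esumD; last 2 first.
- by move=> z' _; rewrite mule_ge0 // lee_fin.
- move=> z' _; apply: adde_ge0; first by rewrite lee_fin mulr_ge0.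
  by rewrite mule_ge0 // lee_fin.
rewrite esumD; last 2 first.
- by move=> z' _; rewrite lee_fin mulr_ge0.
- by move=> z' _; rewrite mule_ge0 // lee_fin.
apply: leeD.
  apply: le_trans (esum_scale_le _ _) _.
  - by [].
  - by move=> z' _; rewrite lee_fin.
  by rewrite -[leRHS]mule1; apply: lee_wpmul2l; rewrite ?lee_fin.
by apply: leeD => //; apply: Hdy.
Qed.

Lemma part1_main : exists M : R, forall n, Etrunc p k n <= M%:E.
Proof.
have [al [K [al0 [K0 HK]]]] := u_bound.
exists (al * k%:R + K)%R => n.
have := claimA n (z:=(k, 0%:Z)) (acc:=0%N) isT.
rewrite add0e => h; apply: le_trans h _.
exact: (HK n (k, 0%:Z)).
Qed.

End Part1.


Section Reindex.
Variable R : realType.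
Local Open Scope ereal_scope.

Lemma reindex1 (x : nat) (y : int) (g : int * int -> \bar R) :
  (forall d, 0 <= g d) -> (forall d, (d.1 < - x%:Z)%R -> g d = 0) ->
  \esum_(z' in [set: nat * int]) g (Defs.diff x%:Z z'.1%:Z y z'.2) =
  \esum_(d in [set: int * int]) g d.
Proof.
move=> g0 gz; rewrite (esumID [set d | (- x%:Z <= d.1)%R]); last by move=> *.
rewrite [X in _ = _ + X]esum1 ?adde0; last first.
  move=> d [_ /=] h; apply: gz; rewrite ltNge; apply/negP => h2; apply: h; exact: h2.
rewrite setTI; symmetry; apply: reindex_esum; split.
- by move=> [a b] _ /=; rewrite /Defs.diff /=; lia.
- by move=> [a b] [a' b'] _ _; rewrite /Defs.diff /= => -[h1 h2]; congr (_, _); lia.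
- move=> [a b] /= ha; exists (absz (a + x%:Z)%R, (b + y)%R) => //; rewrite /Defs.diff /=; congr (_, _); lia.
Qed.


Lemma reindex2 (i j : nat) (g : int * int -> \bar R) :
  (forall d, 0 <= g d) ->
  (forall d, (d.1 < - i%:Z)%R \/ (d.2 < - j%:Z)%R -> g d = 0) ->
  \esum_(z in [set: nat * nat]) g (Defs.diff i%:Z z.1%:Z j%:Z z.2%:Z) =
  \esum_(d in [set: int * int]) g d.
Proof.
move=> g0 gz; rewrite (esumID [set d | (- i%:Z <= d.1)%R /\ (- j%:Z <= d.2)%R]); last by move=> *.
rewrite [X in _ = _ + X]esum1 ?adde0; last first.
  move=> d [_ /=] h; apply: gz.
  case: (boolP (d.1 < - i%:Z)%R) => h1; [by left|right].
  rewrite ltNge; apply/negP => h2; apply: h; split => //; by rewrite leNgt.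
rewrite setTI; symmetry; apply: reindex_esum; split.
- by move=> [a b] _ /=; rewrite /Defs.diff /=; split; lia.
- by move=> [a b] [a' b'] _ _; rewrite /Defs.diff /= => -[h1 h2]; congr (_, _); lia.
- move=> [a b] /= [ha hb]; exists (absz (a + i%:Z)%R, absz (b + j%:Z)%R) => //.
  by rewrite /Defs.diff /=; congr (_, _); lia.
Qed.

End Reindex.


Section Real.
Variable R : realType.

Lemma bnd_gen (s t K u v : R) : 0 < s -> 0 < t -> 0 <= K -> - K <= u -> 0 <= v ->
  v <= expR (s * K) / t * expR (s * u + t * v).
Proof.
move=> s0 t0 K0 hu v0.
have h1 : 1 <= expR (s * K + s * u).
  have := expR_ge1Dx (s * K + s * u); have : 0 <= s * K + s * u.
    by rewrite -mulrDr; apply: mulr_ge0; [exact: ltW | lra].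
  lra.
have h2 : t * v <= expR (t * v) by have := expR_ge1Dx (t * v); lra.
have e : expR (s * K) * expR (s * u + t * v) = expR (s * K + s * u) * expR (t * v).
  by rewrite -!expRD addrA.
rewrite mulrAC e ler_pdivlMr // mulrC.
apply: le_trans h2 _; rewrite -{1}[expR (t * v)]mul1r.
by apply: ler_wpM2r => //; exact: expR_ge0.
Qed.


Lemma esum_affine (T : choiceType) (f m h : T -> R) (al be Mm Mh : R) :
  0 <= al -> 0 <= be -> (forall d, 0 <= m d) -> (forall d, 0 <= h d) ->
  (forall d, f d <= al * m d + be * h d) ->
  (\esum_(d in [set: T]) (m d)%:E <= Mm%:E)%E ->
  (\esum_(d in [set: T]) (h d)%:E <= Mh%:E)%E ->
  (\esum_(d in [set: T]) (f d)%:E <= (al * Mm + be * Mh)%:E)%E.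
Proof.
move=> al0 be0 m0 h0 hf hm hh.
apply: (@le_trans _ _ (\esum_(d in [set: T]) (al%:E * (m d)%:E + be%:E * (h d)%:E))%E).
  by apply: le_esum => d _; rewrite -!EFinM -EFinD lee_fin.
rewrite esumD; last 2 first.
- by move=> d _; rewrite -EFinM lee_fin mulr_ge0.
- by move=> d _; rewrite -EFinM lee_fin mulr_ge0.
rewrite EFinD !EFinM; apply: leeD.
  apply: le_trans (esum_scale_le al0 _) _; first by move=> d _; rewrite lee_fin.
  by apply: lee_wpmul2l; rewrite ?lee_fin.
apply: le_trans (esum_scale_le be0 _) _; first by move=> d _; rewrite lee_fin.
by apply: lee_wpmul2l; rewrite ?lee_fin.
Qed.

End Real.

Section Part2.
Variable R : realType.
Variables (k0 : nat) (mu : int * int -> R)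
  (mu1 mu2 : nat -> int * int -> R) (mu12 : nat -> nat -> int * int -> R).
Hypothesis Hmu : probZ2 mu.
Hypothesis Hmu2 : forall i, (i < k0)%N -> probZ2 (mu2 i).
Hypothesis HA1 : forall a b : int, (a < - k0%:Z \/ b < - k0%:Z) -> mu (a, b) = 0.
Hypothesis HA1'' : forall (i : nat) (a b : int), (i < k0)%N ->
     (b < - k0%:Z \/ a < - i%:Z) -> mu2 i (a, b) = 0.
Variables (delta gamma C : R).
Hypothesis hd : 0 < delta.
Hypothesis hg : 0 < gamma.
Hypothesis HA2 : forall i j : nat,
       (\esum_(z in [set: nat * nat])
          (pZ k0 mu mu1 mu2 mu12 (i, j) z *
           expR (delta * (z.1%:R - i%:R) + gamma * (z.2%:R - j%:R)))%:E
        <= C%:E)%E.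

Definition mx x := if (k0 <= x)%N then mu else mu2 x.

Lemma mx_ge0 x d : 0 <= mx x d.
Proof.
rewrite /mx; case: ifP => h; first exact: Hmu.1.
by apply: (Hmu2 _).1; rewrite ltnNge h.
Qed.

Lemma mx_mass x : (\esum_(d in [set: int * int]) (mx x d)%:E = 1)%E.
Proof.
rewrite /mx; case: ifP => h; first exact: Hmu.2.
by apply: (Hmu2 _).2; rewrite ltnNge h.
Qed.

Lemma mx_supp x d : (d.1 < - x%:Z \/ d.1 < - k0%:Z \/ d.2 < - k0%:Z) -> mx x d = 0.
Proof.
case: d => a b /= h; rewrite /mx; case: ifP => hx.
  apply: HA1; case: h => [h|[h|h]]; [left|left|right] => //; lia.
have hx' : (x < k0)%N by rewrite ltnNge hx.
apply: HA1'' => //; case: h => [h|[h|h]]; [right|right|left] => //; lia.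
Qed.

Lemma mx_supp' x d : mx x d != 0 -> [/\ - x%:Z <= d.1, - k0%:Z <= d.1 & - k0%:Z <= d.2].
Proof.
move=> h; split; rewrite leNgt; apply/negP => h'; move/eqP: h; apply; apply: mx_supp.
- by left.
- by right; left.
- by right; right.
Qed.

Lemma pZ1E z z' : pZ1 k0 mu mu2 z z' = mx z.1 (Defs.diff z.1%:Z z'.1%:Z z.2 z'.2).
Proof. by rewrite /pZ1 /mx; case: ifP. Qed.

Lemma pZE x z : pZ k0 mu mu1 mu2 mu12 (x, k0) z =
  mx x (Defs.diff x%:Z z.1%:Z k0%:Z z.2%:Z).
Proof. by rewrite /pZ /mx /= leqnn andbT; case: (k0 <= x)%N. Qed.

Lemma mx_exp x : (\esum_(d in [set: int * int])
   (mx x d * expR (delta * d.1%:~R + gamma * d.2%:~R))%:E <= C%:E)%E.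
Proof.
set G := fun d : int * int => (mx x d * expR (delta * d.1%:~R + gamma * d.2%:~R))%:E.
rewrite -(@reindex2 _ x k0 G); last 2 first.
- by move=> d; rewrite lee_fin mulr_ge0 ?mx_ge0 ?expR_ge0.
- move=> d h; rewrite /G mx_supp ?mul0r //; tauto.
apply: le_trans (HA2 x k0); rewrite le_eqVlt; apply/orP; left; apply/eqP.
by apply: eq_esum => z _; rewrite pZE /G /Defs.diff /= !intrB.
Qed.


Let Kc := expR (delta * k0%:R) / gamma.
Let Kp := expR (gamma * k0%:R) / delta.
Let E (d : int * int) := expR (delta * d.1%:~R + gamma * d.2%:~R).

Lemma Kc_ge0 : 0 <= Kc. Proof. by rewrite /Kc divr_ge0 ?expR_ge0 // ltW. Qed.
Lemma Kp_ge0 : 0 <= Kp. Proof. by rewrite /Kp divr_ge0 ?expR_ge0 // ltW. Qed.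

Lemma mx_dy x : (\esum_(d in [set: int * int]) (mx x d * (`|d.2|%N)%:R)%:E
   <= (k0%:R * 1 + Kc * C)%:E)%E.
Proof.
apply: (esum_affine (m := mx x) (h := fun d => mx x d * E d)).
- by [].
- exact: Kc_ge0.
- exact: mx_ge0.
- by move=> d; rewrite mulr_ge0 ?mx_ge0 ?expR_ge0.
- move=> [a b]; have [->|hne] := eqVneq (mx x (a, b)) 0.
    by rewrite !mul0r mulr0 addr0.
  have [_ ha hb] := mx_supp' hne; rewrite /= in ha hb.
  have m0 := mx_ge0 x (a, b).
  suff key : (`|b|%N)%:R <= k0%:R + Kc * E (a, b) by nra.
  rewrite natr_absz intr_norm.
  have ha' : - k0%:R <= a%:~R :> R by rewrite -[k0%:R]/(k0%:Z%:~R) -intrN ler_int.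
  have hb' : - k0%:R <= b%:~R :> R by rewrite -[k0%:R]/(k0%:Z%:~R) -intrN ler_int.
  have E0 : 0 <= Kc * E (a, b) by rewrite mulr_ge0 ?Kc_ge0 ?expR_ge0.
  case: (lerP 0 (b%:~R : R)) => hb0.
    rewrite ger0_norm //; have := bnd_gen hd hg (ler0n _ k0) ha' hb0.
    rewrite /Kc /E /= => h; apply: le_trans h _; rewrite lerDr //.
  rewrite ltr0_norm //; lra.
- by rewrite mx_mass.
- exact: mx_exp.
Qed.

Lemma mx_pos x : (\esum_(d in [set: int * int]) (mx x d * Num.max d.1%:~R 0)%:E
   <= (0 * 1 + Kp * C)%:E)%E.
Proof.
apply: (esum_affine (m := mx x) (h := fun d => mx x d * E d)).
- by [].
- exact: Kp_ge0.
- exact: mx_ge0.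
- by move=> d; rewrite mulr_ge0 ?mx_ge0 ?expR_ge0.
- move=> [a b]; have [->|hne] := eqVneq (mx x (a, b)) 0.
    by rewrite !mul0r mulr0 addr0.
  have [_ ha hb] := mx_supp' hne; rewrite /= in ha hb.
  have m0 := mx_ge0 x (a, b).
  suff key : Num.max (a%:~R : R) 0 <= Kp * E (a, b) by nra.
  have hb' : - k0%:R <= b%:~R :> R by rewrite -[k0%:R]/(k0%:Z%:~R) -intrN ler_int.
  case: (lerP 0 (a%:~R : R)) => ha0.
    have := bnd_gen hg hd (ler0n _ k0) hb' ha0.
    by rewrite /Kp /E /= addrC.
  by rewrite mulr_ge0 ?Kp_ge0 ?expR_ge0.
- by rewrite mx_mass.
- exact: mx_exp.
Qed.


Hypothesis hC : 0 < C.

Definition cc := k0%:R * 1 + Kc * C + 1.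
Definition BB := 0 * 1 + Kp * C.

Lemma cc_gt0 : 0 < cc.
Proof. rewrite /cc mulr1. have := Kc_ge0. have : 0 <= Kc * C by rewrite mulr_ge0 ?Kc_ge0 // ltW. have : (0:R) <= k0%:R by []. lra. Qed.

Lemma BB_ge0 : 0 <= BB.
Proof. by rewrite /BB mul0r add0r mulr_ge0 ?Kp_ge0 // ltW. Qed.

Let p := pZ1 k0 mu mu2.

Lemma H_p0 z z' : 0 <= p z z'.
Proof. by rewrite /p pZ1E mx_ge0. Qed.

Lemma H_mass z : (\esum_(z' in [set: nat * int]) (p z z')%:E <= 1)%E.
Proof.
case: z => x y; set G := fun d => (mx x d)%:E.
rewrite (eq_esum (b := fun z' : nat * int => G (Defs.diff x%:Z z'.1%:Z y z'.2))); last first.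
  by move=> z' _; rewrite /p pZ1E.
rewrite reindex1.
- by rewrite /G mx_mass.
- by move=> d; rewrite /G lee_fin mx_ge0.
- by move=> d h; rewrite /G mx_supp //; left.
Qed.

Lemma H_dy z : (\esum_(z' in [set: nat * int]) (p z z' * (`|z'.2 - z.2|%N)%:R)%:E <= cc%:E)%E.
Proof.
case: z => x y; set G := fun d => (mx x d * (`|d.2|%N)%:R)%:E.
rewrite (eq_esum (b := fun z' : nat * int => G (Defs.diff x%:Z z'.1%:Z y z'.2))); last first.
  by move=> z' _; rewrite /p pZ1E.
rewrite reindex1.
- apply: le_trans (mx_dy x) _; rewrite lee_fin /cc; lra.
- by move=> d; rewrite /G lee_fin mulr_ge0 ?mx_ge0.
- by move=> d h; rewrite /G mx_supp ?mul0r //; left.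
Qed.

Lemma H_dx_eq x y : \esum_(z' in [set: nat * int]) (p (x, y) z' * (z'.1)%:R)%:E =
  \esum_(d in [set: int * int]) (mx x d * Num.max (x%:R + d.1%:~R) 0)%:E.
Proof.
set G := fun d => (mx x d * Num.max (x%:R + d.1%:~R) 0)%:E.
rewrite (eq_esum (b := fun z' : nat * int => G (Defs.diff x%:Z z'.1%:Z y z'.2))); last first.
  move=> z' _; rewrite /p pZ1E /G /Defs.diff /= intrB.
  by rewrite (_ : x%:R + (z'.1%:~R - x%:~R) = z'.1%:R :> R) ?max_l //; ring.
rewrite reindex1 //.
- move=> d; rewrite /G lee_fin mulr_ge0 ?mx_ge0 //.
- by move=> d h; rewrite /G mx_supp ?mul0r //; left.
Qed.

Lemma H_dx1 z : (\esum_(z' in [set: nat * int]) (p z z' * (z'.1)%:R)%:E <= (z.1%:R + BB)%:E)%E.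
Proof.
case: z => x y; rewrite H_dx_eq /=.
apply: le_trans (@esum_affine _ _ _ (mx x) (fun d => mx x d * Num.max d.1%:~R 0) x%:R 1 1 BB _ _ _ _ _ _ _) _; last by rewrite mulr1 mul1r.
- by [].
- by [].
- exact: mx_ge0.
- by move=> d; rewrite mulr_ge0 ?mx_ge0 // le_max lexx orbT.
- move=> d; have m0 := mx_ge0 x d.
  suff : Num.max (x%:R + d.1%:~R) 0 <= x%:R + Num.max (d.1%:~R : R) 0 by nra.
  rewrite ge_max; apply/andP; split.
    by rewrite lerD2l le_max lexx.
  by rewrite addr_ge0 // le_max lexx orbT.
- by rewrite mx_mass.
- exact: mx_pos.
Qed.


Hypothesis Hm1 : (m1 mu < 0)%E.

Let Pos := \esum_(d in [set: int * int]) (Num.max (d.1%:~R : R) 0 * mu d)%:E.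
Let Neg := \esum_(d in [set: int * int]) (Num.max (- (d.1%:~R : R)) 0 * mu d)%:E.

Lemma mu_supp d : mu d != 0 -> - k0%:Z <= d.1.
Proof.
move=> h; have : mx k0 d != 0 by rewrite /mx leqnn.
by case/mx_supp'.
Qed.

Lemma Pos_ge0 : (0 <= Pos)%E.
Proof. by apply: esum_ge0 => d _; rewrite lee_fin mulr_ge0 ?(Hmu.1) // le_max lexx orbT. Qed.

Lemma Neg_ge0 : (0 <= Neg)%E.
Proof. by apply: esum_ge0 => d _; rewrite lee_fin mulr_ge0 ?(Hmu.1) // le_max lexx orbT. Qed.

Lemma Pos_le : (Pos <= BB%:E)%E.
Proof.
apply: le_trans (mx_pos k0); rewrite le_eqVlt; apply/orP; left; apply/eqP.
by apply: eq_esum => d _; rewrite /mx leqnn mulrC.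
Qed.

Lemma Neg_le : (Neg <= (k0%:R * 1 + 0 * 1)%:E)%E.
Proof.
apply: (@esum_affine _ _ _ mu mu k0%:R 0 1 1) => //.
- exact: Hmu.1.
- exact: Hmu.1.
- move=> d; have m0 := Hmu.1 d; rewrite mul0r addr0.
  have [->|hne] := eqVneq (mu d) 0; first by rewrite !mulr0.
  have h := mu_supp hne.
  have h' : - k0%:R <= d.1%:~R :> R by rewrite -[k0%:R]/(k0%:Z%:~R) -intrN ler_int.
  suff : Num.max (- (d.1%:~R : R)) 0 <= k0%:R by nra.
  by rewrite ge_max ler0n andbT; lra.
- by rewrite Hmu.2.
- by rewrite Hmu.2.
Qed.

Definition eps := fine Neg - fine Pos.

Lemma fin_of (x : \bar R) (r : R) : (0 <= x)%E -> (x <= r%:E)%E -> x = (fine x)%:E.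
Proof.
move=> h0 h1; rewrite fineK // ge0_fin_numE //; apply: le_lt_trans h1 _; exact: ltry.
Qed.

Lemma ePos : Pos = (fine Pos)%:E. Proof. exact: fin_of Pos_ge0 Pos_le. Qed.
Lemma eNeg : Neg = (fine Neg)%:E. Proof. exact: fin_of Neg_ge0 Neg_le. Qed.

Lemma eps_gt0 : 0 < eps.
Proof.
move: Hm1; rewrite /m1 -/Pos -/Neg ePos eNeg -EFinB lte_fin /eps; lra.
Qed.

Lemma H_dx2 z : (k0 <= z.1)%N ->
  (\esum_(z' in [set: nat * int]) (p z z' * (z'.1)%:R)%:E <= (z.1%:R - eps)%:E)%E.
Proof.
case: z => x y /= hx; rewrite H_dx_eq /mx hx.
set S := esum _ _.
have S0 : (0 <= S)%E.
  by apply: esum_ge0 => d _; rewrite lee_fin mulr_ge0 ?(Hmu.1) // le_max lexx orbT.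
have key : (S + Neg <= (x%:R * 1 + 1 * fine Pos)%:E)%E.
  rewrite /S /Neg -esumD; last 2 first.
  - by move=> d _; rewrite lee_fin mulr_ge0 ?(Hmu.1) // le_max lexx orbT.
  - by move=> d _; rewrite lee_fin mulr_ge0 ?(Hmu.1) // le_max lexx orbT.
  under eq_esum do rewrite -EFinD.
  apply: (@esum_affine _ _ _ mu (fun d => Num.max (d.1%:~R : R) 0 * mu d)) => //.
  - exact: Hmu.1.
  - by move=> d; rewrite mulr_ge0 ?(Hmu.1) // le_max lexx orbT.
  - move=> d; have m0 := Hmu.1 d.
    have [->|hne] := eqVneq (mu d) 0; first by rewrite !mulr0 !mul0r !addr0.
    have h := mu_supp hne.
    have h' : - k0%:R <= d.1%:~R :> R by rewrite -[k0%:R]/(k0%:Z%:~R) -intrN ler_int.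
    have hxk : (k0%:R <= x%:R :> R) by rewrite ler_nat.
    rewrite (@max_l _ _ (x%:R + d.1%:~R)); last by lra.
    case: (lerP 0 (d.1%:~R : R)) => ha.
      by rewrite max_r; [nra | lra].
    by rewrite max_l; [nra | lra].
  - by rewrite Hmu.2.
  - by rewrite -ePos.
have hS : (S <= (x%:R * 1 + 1 * fine Pos)%:E)%E.
  by apply: le_trans key; rewrite leeDl // Neg_ge0.
have eS := fin_of S0 hS.
move: key; rewrite eS eNeg -EFinD !lee_fin /eps; lra.
Qed.


Hypothesis Hirr : irreducible (pZ1 k0 mu mu2).

Lemma pZ1_shift x y t z' : p (x, y + t) (z'.1, z'.2 + t) = p (x, y) z'.
Proof.
rewrite /p /pZ1 /Defs.diff /=.
by rewrite (_ : z'.2 + t - (y + t) = z'.2 - y) //; ring.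
Qed.

Lemma pathprob_shift z s t :
  pathprob p (z.1, z.2 + t) (map (fun w => (w.1, w.2 + t)) s) = pathprob p z s.
Proof.
elim: s z => [|w s IH] z //=.
by rewrite (IH w) (pZ1_shift z.1 z.2 t w).
Qed.

Lemma H_path k x : exists (m : nat) (q : R), (0 < q)%R /\
  forall y : int, exists s, size s = m /\ s != [::] /\ (last (x, y) s).1 = k /\
     (q <= pathprob p (x, y) s)%R.
Proof.
have [s1 [l1 p1]] := Hirr (x, 0) (x.+1, 0).
have [s2 [l2 p2]] := Hirr (x.+1, 0) (k, 0).
have n1 : s1 != [::].
  by apply/eqP => e; move: l1; rewrite e /= => -[] h; lia.
exists (size (s1 ++ s2)), (pathprob p (x, 0) (s1 ++ s2)); split.
  by rewrite pathprob_cat l1 mulr_gt0.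
move=> y; exists (map (fun w => (w.1, w.2 + y)) (s1 ++ s2)); split.
  by rewrite size_map.
have hs1 : (0 < size s1)%N by rewrite lt0n size_eq0.
split; first by rewrite -size_eq0 size_map size_cat addn_eq0 negb_and -lt0n hs1.
split.
  have := last_map (fun w : nat * int => (w.1, w.2 + y)) (s1 ++ s2) (x, 0).
  by rewrite /= add0r => ->; rewrite last_cat l1 l2.
by have := pathprob_shift (x, 0) (s1 ++ s2) y; rewrite /= add0r => ->.
Qed.

Lemma part2_main k : exists M : R, forall n, (Etrunc (pZ1 k0 mu mu2) k n <= M%:E)%E.
Proof.
apply: (@part1_main R p k k0 cc BB eps).
- exact: H_p0.
- exact: H_mass.
- exact: cc_gt0.
- exact: BB_ge0.
- exact: eps_gt0.
- exact: H_dy.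
- exact: H_dx1.
- exact: H_dx2.
- by move=> x _; apply: H_path.
Qed.

End Part2.

Theorem lemmaA2 (R : realType) (k0 : nat) (mu : int * int -> R)
  (mu1 mu2 : nat -> int * int -> R) (mu12 : nat -> nat -> int * int -> R) :
  (0 < k0)%N ->
  (* the measures are probability measures on Z^2 *)
  probZ2 mu ->
  (forall j, (j < k0)%N -> probZ2 (mu1 j)) ->
  (forall i, (i < k0)%N -> probZ2 (mu2 i)) ->
  (forall i j, (i < k0)%N -> (j < k0)%N -> probZ2 (mu12 i j)) ->
  (* (A1) *)
  (forall a b : int, (a < - k0%:Z \/ b < - k0%:Z) -> mu (a, b) = 0) ->
  (forall (j : nat) (a b : int), (j < k0)%N ->
     (a < - k0%:Z \/ b < - j%:Z) -> mu1 j (a, b) = 0) ->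
  (forall (i : nat) (a b : int), (i < k0)%N ->
     (b < - k0%:Z \/ a < - i%:Z) -> mu2 i (a, b) = 0) ->
  (forall (i j : nat) (a b : int), (i < k0)%N -> (j < k0)%N ->
     (a < - i%:Z \/ b < - j%:Z) -> mu12 i j (a, b) = 0) ->
  (* (A2) *)
  (exists delta gamma C : R, 0 < delta /\ 0 < gamma /\ 0 < C /\
     forall i j : nat,
       (\esum_(z in [set: nat * nat])
          (pZ k0 mu mu1 mu2 mu12 (i, j) z *
           expR (delta * (z.1%:R - i%:R) + gamma * (z.2%:R - j%:R)))%:E
        <= C%:E)%E) ->
  (* (A3) *)
  irreducible (pZ0 mu) ->
  irreducible (pZ1 k0 mu mu2) ->
  irreducible (pZ2 k0 mu mu1) ->
  irreducible (pZ k0 mu mu1 mu2 mu12) ->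
  (* m_1 < 0 *)
  (m1 mu < 0)%E ->
  (* conclusion: E_{(k,0)}[ sup_{0 <= s <= T_1(k)} |Y_1(s)| ] < +oo,
     expressed via monotone convergence of the truncations at time n *)
  forall k : nat, exists M : R, forall n : nat,
    (Etrunc (pZ1 k0 mu mu2) k n <= M%:E)%E.
Proof.
move=> hk0 Hmu Hmu1 Hmu2 Hmu12 A1 A1' A1'' A1''' [delta [gamma [C [hd [hg [hC HA2]]]]]] I0 I1 I2 I3 Hm1 k.
exact: (@part2_main R k0 mu mu1 mu2 mu12 Hmu Hmu2 A1 A1'' delta gamma C hd hg HA2 hC Hm1 I1 k).
Qed.
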